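(* Let $P$ be a $d$-dimensional convex polytope with vertex $x$, and let $T$ be a face of $P$ containing $x$. Let $P'$ be $P$ truncated at $T$, and let $F$ be the facet of $P'$ that is entirely contained in the boundary hyperplane of the halfspace used for the truncation. Let $w$ be a vertex of $P$ adjacent to $x$ (in the graph of $P$) and not contained in $T$, and let $v$ be the vertex of $P'$ contained in $F$ and adjacent to $w$ (with $w$ regarded as a vertex of $P'$). If $P$ is simple at $w$, then $P'$ is simple at $v$.
   Context: For a polytope $P$ and face $T$, ''$P$ truncated at $T$'' is the polytope obtained by intersecting $P$ with a closed halfspace which contains no vertex of $T$ and whose interior contains all vertices of $P$ not in $T$. A $d$-dimensional polytope is simple at a vertex $v$ if $v$ has degree $d$ in the graph of the polytope (graph: vertices of the polytope, adjacent iff they lie on a common $1$-dimensional face). *)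

(* Defs.v *)
From HB Require Import structures.
From mathcomp Require Import all_boot all_order all_algebra.
Set Implicit Arguments. Unset Strict Implicit. Unset Printing Implicit Defensive.
Import Order.TTheory GRing.Theory Num.Theory.
Local Open Scope ring_scope.

Section Polytopes.
Variables (R : realFieldType) (n : nat).
Notation pt := 'rV[R]_n.

Definition dotp (c y : pt) : R := \sum_(i < n) c 0 i * y 0 i.

Definition in_conv (S : seq pt) (y : pt) : Prop :=
  exists lam : 'I_(size S) -> R,
    (forall i, 0 <= lam i) /\ \sum_i lam i = 1 /\
    y = \sum_i lam i *: S`_(nat_of_ord i).

Definition is_polytope (P : pt -> Prop) : Prop :=
  exists S : seq pt, forall y, P y <-> in_conv S y.

Definition affindep (k : nat) (p : 'I_k.+1 -> pt) : bool :=
  row_free (\matrix_(i < k) (p (lift ord0 i) - p ord0)).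

Definition has_dim (K : pt -> Prop) (k : nat) : Prop :=
  (exists p : 'I_k.+1 -> pt, (forall i, K (p i)) /\ affindep p) /\
  ~ (exists p : 'I_k.+2 -> pt, (forall i, K (p i)) /\ affindep p).

(* F is a face of K: the intersection of K with a supporting hyperplane
   (c = 0 allowed, giving K itself; empty faces allowed) *)
Definition is_face (K F : pt -> Prop) : Prop :=
  (exists (c : pt) (beta : R),
    (forall y, K y -> dotp c y <= beta) /\
    (forall y, F y <-> (K y /\ dotp c y = beta))).

Definition is_vertex (K : pt -> Prop) (u : pt) : Prop :=
  is_face K (fun y => y = u).

Definition adjacent (K : pt -> Prop) (u v : pt) : Prop :=
  [/\ is_vertex K u, is_vertex K v, u <> v &
      exists E, [/\ is_face K E, has_dim E 1, E u & E v]].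

Definition degree (K : pt -> Prop) (v : pt) (k : nat) : Prop :=
  exists l : seq pt, [/\ uniq l, size l = k &
                         forall u, adjacent K v u <-> u \in l].

Definition simple_at (K : pt -> Prop) (v : pt) : Prop :=
  exists d, has_dim K d /\ degree K v d.

End Polytopes.

(* Main.v *)
Require Import Defs.
From HB Require Import structures.
From mathcomp Require Import all_boot all_order all_algebra.
From mathcomp Require Import ring lra zify.
From Stdlib Require Import Classical ClassicalEpsilon.
Set Implicit Arguments. Unset Strict Implicit. Unset Printing Implicit Defensive.
Import Order.TTheory GRing.Theory Num.Theory.
Local Open Scope ring_scope.

Section Aux.
Variables (R : realFieldType) (n : nat).
Notation pt := 'rV[R]_n.
Implicit Types (c x y z g p q : pt) (X G : seq pt) (K : pt -> Prop).

Lemma dotpDr c x y : dotp c (x + y) = dotp c x + dotp c y.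
Proof. rewrite /dotp -big_split /=; apply: eq_bigr => i _; by rewrite mxE mulrDr. Qed.
Lemma dotpZr c k x : dotp c (k *: x) = k * dotp c x.
Proof. rewrite /dotp mulr_sumr; apply: eq_bigr => i _; by rewrite mxE mulrCA. Qed.
Lemma dotpNr c x : dotp c (- x) = - dotp c x.
Proof. by rewrite -scaleN1r dotpZr mulN1r. Qed.
Lemma dotpBr c x y : dotp c (x - y) = dotp c x - dotp c y.
Proof. by rewrite dotpDr dotpNr. Qed.
Lemma dotp0r c : dotp c 0 = 0.
Proof. by rewrite -(scale0r 0) dotpZr mul0r. Qed.
Lemma dotpC c x : dotp c x = dotp x c.
Proof. rewrite /dotp; apply: eq_bigr => i _; by rewrite mulrC. Qed.
Lemma dotpDl c1 c2 x : dotp (c1 + c2) x = dotp c1 x + dotp c2 x.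
Proof. by rewrite !(dotpC _ x) dotpDr. Qed.
Lemma dotpZl k c x : dotp (k *: c) x = k * dotp c x.
Proof. by rewrite !(dotpC _ x) dotpZr. Qed.
Lemma dotpBl c1 c2 x : dotp (c1 - c2) x = dotp c1 x - dotp c2 x.
Proof. by rewrite !(dotpC _ x) dotpBr. Qed.
Lemma dotp_sumr c I (r : seq I) (P : pred I) (F : I -> pt) :
  dotp c (\sum_(i <- r | P i) F i) = \sum_(i <- r | P i) dotp c (F i).
Proof.
elim/big_rec2: _ => [|i y1 y2 _ <-]; first by rewrite dotp0r.
by rewrite dotpDr.
Qed.
Lemma mul_self_ge0 (r : R) : 0 <= r * r.
Proof. by rewrite -expr2 sqr_ge0. Qed.
Lemma dotp_ge0 x : 0 <= dotp x x.
Proof. by rewrite /dotp; apply: sumr_ge0 => i _; rewrite mul_self_ge0. Qed.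
Lemma dotp_gt0 x : x != 0 -> 0 < dotp x x.
Proof.
move=> nx; rewrite lt_def dotp_ge0 andbT; apply/negP => /eqP H.
move/eqP: nx; apply; apply/rowP => i; rewrite mxE.
have H2 : \sum_(i < n) x 0 i * x 0 i = 0 by rewrite -/(dotp x x) H.
have := psumr_eq0P (fun i _ => mul_self_ge0 (x 0 i)) H2.
move=> /(_ i isT) /eqP.
by rewrite mulf_eq0 orbb => /eqP.
Qed.

Definition hullw X (t : R) (y : pt) : Prop :=
  exists lam : 'I_(size X) -> R, (forall i, 0 <= lam i) /\ \sum_i lam i = t /\
    y = \sum_i lam i *: X`_i.
Definition cone X y := exists t, hullw X t y.

Lemma hullw0 X : hullw X 0 0.
Proof.
exists (fun _ => 0); split => //; split; first by rewrite big1.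
by rewrite big1 // => i _; rewrite scale0r.
Qed.

Lemma hullwD X t1 t2 y1 y2 : hullw X t1 y1 -> hullw X t2 y2 -> hullw X (t1 + t2) (y1 + y2).
Proof.
move=> [l1 [h1 [s1 e1]]] [l2 [h2 [s2 e2]]].
exists (fun i => l1 i + l2 i); split; first by move=> i; rewrite addr_ge0.
split; first by rewrite big_split /= s1 s2.
by rewrite e1 e2 -big_split /=; apply: eq_bigr => i _; rewrite scalerDl.
Qed.

Lemma hullwZ X k t y : 0 <= k -> hullw X t y -> hullw X (k * t) (k *: y).
Proof.
move=> k0 [l [h [s e]]]; exists (fun i => k * l i); split; first by move=> i; rewrite mulr_ge0.
split; first by rewrite -mulr_sumr s.
by rewrite e scaler_sumr; apply: eq_bigr => i _; rewrite scalerA.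
Qed.

Lemma hullw_mem X x : x \in X -> hullw X 1 x.
Proof.
move=> xX; have ix : (index x X < size X)%N by rewrite index_mem.
pose j := Ordinal ix.
exists (fun i => (i == j)%:R); split; first by move=> i; rewrite ler0n.
split.
  by rewrite (bigD1 j) //= eqxx big1 ?addr0 // => i /negbTE ->.
rewrite (bigD1 j) //= eqxx scale1r big1 ?addr0 ?(nth_index _ xX) // => i /negbTE ->.
by rewrite scale0r.
Qed.

Lemma hullw_sum X I (r : seq I) (P : pred I) (T : I -> R) (F : I -> pt) :
  (forall i, P i -> hullw X (T i) (F i)) ->
  hullw X (\sum_(i <- r | P i) T i) (\sum_(i <- r | P i) F i).
Proof.
move=> H; elim/big_rec2: _ => [|i y1 y2 Pi Hy]; [exact: hullw0 | exact: hullwD (H i Pi) Hy].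
Qed.

Lemma hullw_ge0 X t y : hullw X t y -> 0 <= t.
Proof. by move=> [l [h [<- _]]]; apply: sumr_ge0. Qed.

Lemma hullw_le X t y c b : hullw X t y -> (forall x, x \in X -> dotp c x <= b) ->
  dotp c y <= t * b.
Proof.
move=> [l [h [<- ->]]] H; rewrite dotp_sumr mulr_suml; apply: ler_sum => i _.
by rewrite dotpZr; apply: (ler_wpM2l (h i)); apply: H; apply: mem_nth.
Qed.

Lemma hullw_sub X Y t y : (forall x, x \in X -> hullw Y 1 x) -> hullw X t y -> hullw Y t y.
Proof.
move=> H [l [h [<- ->]]]; apply: hullw_sum => i _.
by have := hullwZ (h i) (H _ (mem_nth 0 (ltn_ord i))); rewrite mulr1.
Qed.

Lemma hullw_nil t y : hullw [::] t y -> t = 0 /\ y = 0.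
Proof. by move=> [l [h [<- ->]]]; rewrite !big_ord0. Qed.

Lemma hullw_cons g G t p : hullw (g :: G) t p ->
  exists k, 0 <= k /\ hullw G (t - k) (p - k *: g).
Proof.
move=> [l [h [s e]]]; exists (l ord0); split => //.
exists (fun i => l (lift ord0 i)); split => //; split.
  by rewrite -s big_ord_recl addrAC subrr add0r.
rewrite e big_ord_recl addrAC subrr add0r; apply: eq_bigr => i _.
by rewrite lift0.
Qed.

Lemma hullw_size X t y : hullw X t y -> t != 0 -> (0 < size X)%N.
Proof. by case: X => // /hullw_nil [-> _]; rewrite eqxx. Qed.

Lemma cone_mem X x : x \in X -> cone X x.
Proof. by move/hullw_mem; exists 1. Qed.
Lemma cone0 X : cone X 0.
Proof. by exists 0; apply: hullw0. Qed.
Lemma coneD X y1 y2 : cone X y1 -> cone X y2 -> cone X (y1 + y2).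
Proof. by move=> [t1 h1] [t2 h2]; exists (t1 + t2); apply: hullwD. Qed.
Lemma coneZ X k y : 0 <= k -> cone X y -> cone X (k *: y).
Proof. by move=> k0 [t h]; exists (k * t); apply: hullwZ. Qed.
Lemma cone_sum X I (r : seq I) (P : pred I) (F : I -> pt) :
  (forall i, P i -> cone X (F i)) -> cone X (\sum_(i <- r | P i) F i).
Proof. move=> H; apply: big_ind => //; [exact: cone0 | exact: coneD]. Qed.
Lemma cone_sub X Y y : (forall x, x \in X -> cone Y x) -> cone X y -> cone Y y.
Proof.
move=> H [t [l [h [_ ->]]]]; apply: cone_sum => i _.
by apply: coneZ => //; apply: H; apply: mem_nth.
Qed.
Lemma cone_le X y c : cone X y -> (forall x, x \in X -> dotp c x <= 0) -> dotp c y <= 0.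
Proof. by move=> [t h] H; have := hullw_le h H; rewrite mulr0. Qed.
Lemma cone_strict X y c : cone X y -> (forall x, x \in X -> dotp c x < 0) ->
  0 <= dotp c y -> y = 0.
Proof.
move=> [t [l [h [_ e]]]] H cy.
have H0 : forall i, 0 <= - (l i * dotp c X`_i).
  move=> i; rewrite oppr_ge0; apply: mulr_ge0_le0 => //.
  by apply: ltW; apply: H; apply: mem_nth.
have S0 : \sum_i - (l i * dotp c X`_i) = 0.
  apply/eqP; rewrite eq_le sumr_ge0 // andbT sumrN oppr_le0.
  by move: cy; rewrite e dotp_sumr; under eq_bigr do rewrite dotpZr.
have := psumr_eq0P (fun i _ => H0 i) S0 => Hi.
rewrite e big1 // => i _.
have /eqP := Hi i isT; rewrite oppr_eq0 mulf_eq0 => /orP [/eqP -> | ]; first by rewrite scale0r.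
by rewrite lt_eqF // H // mem_nth.
Qed.
Lemma cone_rem g G p : cone G p -> exists k, 0 <= k /\ cone (rem g G) (p - k *: g).
Proof.
move=> [t [l [h [_ ->]]]].
exists (\sum_(i < size G | G`_i == g) l i); split; first by apply: sumr_ge0.
rewrite (bigID (fun i : 'I_(size G) => G`_i == g)) /= scaler_suml.
have -> : \sum_(i < size G | G`_i == g) l i *: G`_i = \sum_(i < size G | G`_i == g) l i *: g.
  by apply: eq_bigr => i /eqP ->.
rewrite addrAC subrr add0r; apply: cone_sum => i Hi.
by apply: coneZ => //; apply: cone_mem; apply: rem_mem => //; apply: mem_nth.
Qed.
Lemma cone_remI g G p : cone (rem g G) p -> cone G p.
Proof. by apply: cone_sub => x /mem_rem; apply: cone_mem. Qed.
Lemma cone_nil p : cone [::] p -> p = 0.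
Proof. by move=> [t /hullw_nil []]. Qed.

Lemma hullw_consI h G t r : hullw G t r -> hullw (h :: G) t r.
Proof. by apply: hullw_sub => x xG; apply: hullw_mem; rewrite inE xG orbT. Qed.
Lemma cone_consI h G r : cone G r -> cone (h :: G) r.
Proof. by apply: cone_sub => x xG; apply: cone_mem; rewrite inE xG orbT. Qed.

Lemma hullw_map c g G t q : dotp c g != 0 ->
  hullw (map (fun z => z - (dotp c z / dotp c g) *: g) G) t q ->
  exists r, hullw G t r /\ q = r - (dotp c r / dotp c g) *: g.
Proof.
move=> cg; elim: G t q => [|h G IH] t q /=.
  move/hullw_nil => [-> ->]; exists 0; split; first exact: hullw0.
  by rewrite dotp0r mul0r scale0r subr0.
move/hullw_cons => [k [k0 /IH [r [hr e]]]].
exists (r + k *: h); split.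
  have -> : t = (t - k) + k * 1 by rewrite mulr1 subrK.
  apply: hullwD; first exact: hullw_consI.
  by apply: hullwZ => //; apply: hullw_mem; apply: mem_head.
apply/rowP => i; have := congr1 (fun z => z 0 i) e; rewrite !mxE dotpDr dotpZr => e'.
lra.
Qed.

Lemma farkas_aux m : forall G p, size G = m -> ~ cone G p ->
  exists c, 0 < dotp c p /\ forall h, h \in G -> dotp c h <= 0.
Proof.
elim: m => [|m IH] [|g G] p //= sz ncp.
- exists p; split => //; apply: dotp_gt0; apply/eqP => p0; apply: ncp.
  by rewrite p0; exact: cone0.
- case: sz => sz.
  have ncp' : ~ cone G p by move=> hc; apply: ncp; apply: cone_consI.
  have [c [cp cG]] := IH G p sz ncp'.
  case: (lerP (dotp c g) 0) => cg.
    by exists c; split => // h; rewrite inE => /orP [/eqP -> // | ]; exact: cG.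
  have cg0 : dotp c g != 0 by rewrite gt_eqF.
  pose L := fun z => z - (dotp c z / dotp c g) *: g.
  have ncL : ~ cone (map L G) (L p).
    move=> [t /(hullw_map cg0) [r [hr e]]]; apply: ncp.
    have cr : dotp c r <= 0 by apply: (cone_le (ex_intro _ t hr)).
    have -> : p = r + ((dotp c p - dotp c r) / dotp c g) *: g.
      apply/rowP => i; have := congr1 (fun z => z 0 i) e; rewrite /L !mxE => e'.
      lra.
    apply: coneD; first by apply: cone_consI; exists t.
    apply: coneZ; last by apply: cone_mem; apply: mem_head.
    by apply: divr_ge0; [rewrite subr_ge0; apply: le_trans cr _; apply: ltW | apply: ltW].
  have [c' [c'p c'G]] := IH (map L G) (L p) (etrans (size_map _ _) sz) ncL.
  exists (c' - (dotp c' g / dotp c g) *: c).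
  have key : forall z, dotp (c' - (dotp c' g / dotp c g) *: c) z = dotp c' (L z).
    move=> z; rewrite /L dotpBl dotpZl dotpBr dotpZr; congr (_ - _); by field.
  split; first by rewrite key.
  move=> h; rewrite inE => /orP [/eqP -> | hG].
    by rewrite key /L divff // scale1r subrr dotp0r.
  by rewrite key; apply: c'G; apply: map_f.
Qed.

Lemma farkas G p : ~ cone G p ->
  exists c, 0 < dotp c p /\ forall h, h \in G -> dotp c h <= 0.
Proof. exact: farkas_aux. Qed.

Definition indep m (q : 'I_m -> pt) :=
  forall mu : 'I_m -> R, \sum_k mu k *: q k = 0 -> forall k, mu k = 0.

Lemma mulmx_rows m (x : 'rV[R]_m) (q : 'I_m -> pt) :
  x *m (\matrix_(k < m) q k) = \sum_k x 0 k *: q k.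
Proof. by rewrite mulmx_sum_row; apply: eq_bigr => k _; rewrite rowK. Qed.

Lemma indep_rowfree m (q : 'I_m -> pt) : indep q -> row_free (\matrix_(k < m) q k).
Proof.
move=> H; apply: inj_row_free => x; rewrite mulmx_rows => /H Hx.
by apply/rowP => k; rewrite mxE Hx.
Qed.

Lemma rowfree_indep m (q : 'I_m -> pt) : row_free (\matrix_(k < m) q k) -> indep q.
Proof.
move=> H mu e k.
have E : (\row_k mu k) *m (\matrix_(k<m) q k) = 0 *m (\matrix_(k<m) q k).
  by rewrite mul0mx mulmx_rows; under eq_bigr do rewrite mxE.
by have := congr1 (fun x : 'rV[R]_m => x 0 k) (row_free_inj H E); rewrite !mxE.
Qed.

Lemma solve_dual m (q : 'I_m -> pt) (tg : 'I_m -> R) : indep q ->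
  exists c, forall k, dotp c (q k) = tg k.
Proof.
move=> /indep_rowfree /row_freeP [B HB].
exists ((B *m \col_k tg k)^T) => k.
have -> : dotp ((B *m \col_k tg k)^T) (q k) = ((q k) *m (B *m \col_k tg k)) 0 0.
  by rewrite /dotp mxE; apply: eq_bigr => i _; rewrite mxE mulrC.
rewrite -(rowK q k) mulmxA -row_mul HB -row_mul mul1mx !mxE.
by [].
Qed.

Lemma sum2 (V : nmodType) (F : 'I_2 -> V) : \sum_i F i = F ord0 + F ord_max.
Proof. by rewrite big_ord_recl big_ord1; congr (_ + F _); apply: val_inj. Qed.

Lemma sum_delta m (r : 'I_m -> pt) j (x : R) :
  \sum_k (((k == j)%:R * x) *: r k) = x *: r j.
Proof.
rewrite (bigD1 j) //= eqxx mul1r big1 ?addr0 // => k /negbTE ->.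
by rewrite mul0r scale0r.
Qed.

Lemma ord2_case (i : 'I_2) : i = ord0 \/ i = ord_max.
Proof. by case: i => [[|[|]]] // H; [left | right]; apply: val_inj. Qed.

Lemma indep2_of m (r : 'I_m -> pt) j k a b : indep r -> j != k -> a != 0 -> b != 0 ->
  indep (fun i : 'I_2 => if i == ord0 then a *: r j else b *: r k).
Proof.
move=> H jk a0 b0 mu; rewrite sum2 /= => e.
pose nu := fun l0 => (l0 == j)%:R * (mu ord0 * a) + (l0 == k)%:R * (mu ord_max * b).
have e2 : \sum_l0 nu l0 *: r l0 = 0.
  rewrite -[RHS]e (eq_bigr (fun l0 => ((l0 == j)%:R * (mu ord0 * a)) *: r l0 +
      ((l0 == k)%:R * (mu ord_max * b)) *: r l0)); last by move=> l0 _; rewrite scalerDl.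
  by rewrite big_split /= !sum_delta !scalerA.
have := H nu e2 j; have := H nu e2 k; rewrite /nu eqxx (negbTE jk) eq_sym (negbTE jk).
rewrite !mul0r !mul1r add0r addr0 => /eqP; rewrite mulf_eq0 (negbTE b0) orbF => /eqP m1.
rewrite eqxx mul1r.
move=> /eqP; rewrite mulf_eq0 (negbTE a0) orbF => /eqP m0.
by move=> i; case: (ord2_case i) => ->.
Qed.

Lemma line_not_indep (q : 'I_2 -> pt) g a0 a1 :
  q ord0 = a0 *: g -> q ord_max = a1 *: g -> ~ indep q.
Proof.
move=> e0 e1 H; case: (eqVneq a0 0) => [a00 | a0n].
  have := H (fun i => if i == ord0 then 1 else 0).
  rewrite sum2 /= e0 a00 scale0r scale1r scale0r addr0 => /(_ erefl ord0) /=.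
  by move/eqP; rewrite oner_eq0.
have := H (fun i => if i == ord0 then a1 else - a0).
rewrite sum2 /= e0 e1 !scalerA mulrC mulNr scaleNr subrr => /(_ erefl ord_max) /=.
by move/eqP; rewrite oppr_eq0 (negbTE a0n).
Qed.

Lemma line_dim (E : pt -> Prop) z g :
  (forall y, E y -> exists tau, y = z + tau *: g) ->
  ~ exists p : 'I_3 -> pt, (forall i, E (p i)) /\ affindep p.
Proof.
move=> Hl [p [Ep /rowfree_indep A]].
have [t0 e0] := Hl _ (Ep ord0).
have [t1 e1] := Hl _ (Ep (lift ord0 ord0)).
have [t2 e2] := Hl _ (Ep (lift ord0 ord_max)).
apply: (line_not_indep (g := g) (a0 := t1 - t0) (a1 := t2 - t0) _ _ A) => /=.
  by rewrite e1 e0 scalerBl opprD addrACA subrr add0r.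
by rewrite e2 e0 scalerBl opprD addrACA subrr add0r.
Qed.

Lemma has_dim1 (E : pt -> Prop) z g : g != 0 -> E z -> E (z + g) ->
  (forall y, E y -> exists tau, y = z + tau *: g) -> has_dim E 1.
Proof.
move=> g0 Ez Eg Hl; split; last exact: line_dim Hl.
exists (fun i : 'I_2 => if i == ord0 then z else z + g); split.
  by move=> i; case: ifP.
apply: indep_rowfree => mu; rewrite big_ord1 /= => e k.
rewrite (ord1 k); move/eqP: e; rewrite addrAC subrr add0r scaler_eq0 (negbTE g0) orbF.
by move/eqP.
Qed.

Lemma affindep3 z a b : indep (fun i : 'I_2 => if i == ord0 then a else b) ->
  affindep (fun i : 'I_3 => match nat_of_ord i with 0 => z | 1 => z + a | _ => z + b end).
Proof.
have E : forall x, z + x - z = x by move=> x; rewrite addrC addKr.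
move=> H; apply: indep_rowfree => mu; rewrite sum2 !lift0 /= !E => e.
by apply: H; rewrite sum2.
Qed.

Lemma vertex_in K u : is_vertex K u -> K u.
Proof. by move=> [c [b [_ H]]]; have /H [] : u = u by []. Qed.

Lemma vertex_between K x y1 y2 th : is_vertex K x -> K y1 -> K y2 -> 0 < th -> th < 1 ->
  x = (1 - th) *: y1 + th *: y2 -> x = y1.
Proof.
move=> [c [b [Hle Hf]]] K1 K2 t0 t1 ex.
have [_ cx] : K x /\ dotp c x = b by apply/Hf.
have h1 := Hle _ K1; have h2 := Hle _ K2.
have : dotp c y1 = b.
  move: cx; rewrite ex dotpDr !dotpZr => cx.
  have e1 : (1 - th) * (b - dotp c y1) = th * (dotp c y2 - b) by lra.
  have e2 : th * (dotp c y2 - b) <= 0 by apply: mulr_ge0_le0; [apply: ltW | rewrite subr_le0].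
  have t1' : 0 < 1 - th by rewrite subr_gt0.
  have e3 : b - dotp c y1 <= 0 by rewrite -(pmulr_rle0 _ t1') e1.
  lra.
by move=> e; symmetry; apply/Hf; split.
Qed.

Lemma vertex_of_strict K X u f : (forall y, K y <-> hullw X 1 y) -> u \in X ->
  (forall x, x \in X -> x != u -> dotp f x < dotp f u) -> is_vertex K u.
Proof.
move=> HK uX Hs; exists f, (dotp f u); split.
  move=> y /HK hy; rewrite -[dotp f u]mul1r; apply: (hullw_le hy) => x xX.
  by case: (eqVneq x u) => [-> // | ne]; exact: ltW (Hs x xX ne).
move=> y; split; first by move=> ->; split => //; apply/HK; apply: hullw_mem.
move=> [/HK [l [h [s e]]] fy].
have H0 : forall i, 0 <= l i * (dotp f u - dotp f X`_i).
  move=> i; apply: mulr_ge0 => //; rewrite subr_ge0.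
  by case: (eqVneq X`_i u) => [-> // | ne]; exact: ltW (Hs _ (mem_nth 0 (ltn_ord i)) ne).
have S0 : \sum_i l i * (dotp f u - dotp f X`_i) = 0.
  transitivity (dotp f u * \sum_i l i - dotp f y).
    rewrite e dotp_sumr mulr_sumr -sumrB; apply: eq_bigr => i _; rewrite dotpZr; ring.
  by rewrite s mulr1 fy subrr.
have Hi := psumr_eq0P (fun i _ => H0 i) S0.
rewrite e (eq_bigr (fun i => l i *: u)).
  by rewrite -scaler_suml s scale1r.
move=> i _; case: (eqVneq X`_i u) => [-> // | ne].
have /eqP := Hi i isT; rewrite mulf_eq0 subr_eq0 => /orP [/eqP -> | /eqP E].
  by rewrite !scale0r.
by have := Hs _ (mem_nth 0 (ltn_ord i)) ne; rewrite E ltxx.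
Qed.

Lemma seq_argmax (f : pt -> R) X : X != [::] ->
  exists2 u, u \in X & forall x, x \in X -> f x <= f u.
Proof.
elim: X => // x X IH _; case: (eqVneq X [::]) => [-> | /IH [u uX Hu]].
  by exists x; [rewrite mem_head | move=> y; rewrite inE => /eqP ->].
case: (lerP (f u) (f x)) => h.
  exists x; first by rewrite mem_head.
  by move=> y; rewrite inE => /orP [/eqP -> // | /Hu H]; exact: le_trans H h.
exists u; first by rewrite inE uX orbT.
by move=> y; rewrite inE => /orP [/eqP -> | /Hu //]; exact: ltW.
Qed.

Lemma sum_seq_ge (F : pt -> R) (P : pred pt) X x : x \in X -> P x ->
  (forall y, P y -> 0 <= F y) -> F x <= \sum_(y <- X | P y) F y.
Proof.
elim: X => // y X IH; rewrite inE big_cons => /orP [/eqP <- | xX] Px H0.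
  by rewrite Px lerDl sumr_ge0.
case: ifP => Py; last exact: IH.
by apply: le_trans (IH xX Px H0) _; rewrite lerDr H0.
Qed.

Lemma edge_lemma (K : pt -> Prop) X z c g t0 :
  (forall y, K y <-> hullw X 1 y) -> is_vertex K z ->
  (forall y, K y -> dotp c y <= dotp c z) ->
  (forall y, K y -> dotp c y = dotp c z -> exists tau, y = z + tau *: g) ->
  g != 0 -> 0 < t0 -> K (z + t0 *: g) -> dotp c g = 0 ->
  exists tau, t0 <= tau /\ adjacent K z (z + tau *: g).
Proof.
move=> HK vz Hc Hl g0 t00 Kt cg.
have Kz := vertex_in vz.
have XK : forall x, x \in X -> K x by move=> x /hullw_mem /HK.
pose off := fun x => dotp c x < dotp c z.
pose M := 1 + \sum_(x <- X | off x) `|dotp g x - dotp g z| / (dotp c z - dotp c x).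
pose f := M *: c + g.
have gg := dotp_gt0 g0.
have fE : forall y, dotp f y = M * dotp c y + dotp g y by move=> y; rewrite dotpDl dotpZl.
have fzt : dotp f (z + t0 *: g) = M * dotp c z + dotp g z + t0 * dotp g g.
  by rewrite fE !dotpDr !dotpZr cg mulr0 addr0 addrA.
have fline : forall tau, dotp f (z + tau *: g) = M * dotp c z + dotp g z + tau * dotp g g.
  by move=> tau; rewrite fE !dotpDr !dotpZr cg mulr0 addr0 addrA.
have A : forall x, x \in X -> off x -> dotp f x < dotp f (z + t0 *: g).
  move=> x xX ox; rewrite fzt fE.
  have dpos : 0 < dotp c z - dotp c x by rewrite subr_gt0.
  set q := `|dotp g x - dotp g z| / (dotp c z - dotp c x).
  have q0 : 0 <= q by apply: divr_ge0 => //; apply: ltW.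
  have qM : q <= M - 1.
    rewrite /M addrAC subrr add0r.
    apply: (sum_seq_ge (F := fun x => `|dotp g x - dotp g z| / (dotp c z - dotp c x))) xX ox _.
    by move=> y oy; apply: divr_ge0 => //; apply: ltW; rewrite subr_gt0.
  have qd : q * (dotp c z - dotp c x) = `|dotp g x - dotp g z|.
    by rewrite /q divfK // gt_eqF.
  have ab := ler_norm (dotp g x - dotp g z).
  have p1 : 0 <= (M - 1 - q) * (dotp c z - dotp c x).
    by apply: mulr_ge0; [rewrite subr_ge0 | apply: ltW].
  have p2 := mulr_gt0 t00 gg.
  lra.
have Xn : X != [::].
  apply/eqP => X0; move/HK: Kz; rewrite X0 => /hullw_nil [] /eqP.
  by rewrite oner_eq0.
have [u uX Hu] := seq_argmax (fun y => dotp f y) Xn.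
have fu : dotp f (z + t0 *: g) <= dotp f u.
  by rewrite -[dotp f u]mul1r; apply: (hullw_le (iffLR (HK _) Kt)).
have onu : dotp c u = dotp c z.
  case: (ltP (dotp c u) (dotp c z)) => ou.
    by have := lt_le_trans (A u uX ou) fu; rewrite ltxx.
  by apply/eqP; rewrite eq_le ou (Hc _ (XK u uX)).
have [tu eu] := Hl u (XK u uX) onu.
have t0tu : t0 <= tu.
  move: fu; rewrite eu fline fzt lerD2l.
  by rewrite ler_pM2r.
have Hs : forall x, x \in X -> x != u -> dotp f x < dotp f u.
  move=> x xX xu; case: (ltP (dotp c x) (dotp c z)) => ox.
    exact: lt_le_trans (A x xX ox) fu.
  have ex : dotp c x = dotp c z by apply/eqP; rewrite eq_le ox (Hc _ (XK x xX)).
  have [tx etx] := Hl x (XK x xX) ex.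
  have := Hu x xX; rewrite etx eu !fline lerD2l ler_pM2r // le_eqVlt => /orP [/eqP E | lt].
    by move: xu; rewrite etx eu E eqxx.
  by rewrite ltrD2l ltr_pM2r.
have vu := vertex_of_strict HK uX Hs.
exists tu; split => //; split => //; first by rewrite -eu.
  move=> E; have /eqP : tu *: g = 0 by apply: (addrI z); rewrite addr0 -E.
  rewrite scaler_eq0 (negbTE g0) orbF => /eqP tu0.
  by move: t00; rewrite ltNge; move/negP; apply; rewrite -tu0.
exists (fun y => K y /\ dotp c y = dotp c z); split.
- by exists c, (dotp c z); split.
- apply: (has_dim1 (g := t0 *: g)).
  + by rewrite scaler_eq0 (negbTE g0) orbF gt_eqF.
  + exact: (conj Kz erefl).
  + by split => //; rewrite dotpDr dotpZr cg mulr0 addr0.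
  + move=> y [Ky cy]; have [tau ->] := Hl y Ky cy.
    by exists (tau / t0); rewrite scalerA divfK // gt_eqF.
- exact: (conj Kz erefl).
- by rewrite -eu; split => //; apply: XK.
Qed.

Lemma ray_of_edge K z m (r : 'I_m -> pt) (eps : 'I_m -> R) (E : pt -> Prop) y :
  indep r -> (forall k, 0 < eps k) -> (forall k, K (z + eps k *: r k)) ->
  (forall y, K y -> exists nu : 'I_m -> R,
      (forall k, 0 <= nu k) /\ y - z = \sum_k nu k *: r k) ->
  is_face K E -> has_dim E 1 -> E z -> E y -> y <> z ->
  exists j tau, 0 < tau /\ y = z + tau *: r j.
Proof.
move=> Hr He Hk Hc [c [b [Hle Hf]]] [_ Hd] Ez Ey yz.
have [Kz cz] := (Hf z).1 Ez.
have [Ky cy] := (Hf y).1 Ey.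
have cr : forall k, dotp c (r k) <= 0.
  move=> k; have := Hle _ (Hk k); rewrite dotpDr dotpZr cz => h.
  have h2 : eps k * dotp c (r k) <= 0 by lra.
  by rewrite -(pmulr_rle0 _ (He k)).
have [nu [nu0 ey]] := Hc y Ky.
have e : \sum_k nu k * dotp c (r k) = 0.
  rewrite -(eq_bigr _ (fun k _ => dotpZr c (nu k) (r k))) -dotp_sumr -ey.
  by rewrite dotpBr cy cz subrr.
have S0 : \sum_k - (nu k * dotp c (r k)) = 0 by rewrite sumrN e oppr0.
have H0 : forall k, 0 <= - (nu k * dotp c (r k)).
  by move=> k; rewrite oppr_ge0; exact: mulr_ge0_le0 (nu0 k) (cr k).
have Z := psumr_eq0P (fun k _ => H0 k) S0.
have Zk : forall k, nu k != 0 -> dotp c (r k) = 0.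
  move=> k nk; have /eqP := Z k isT; rewrite oppr_eq0 mulf_eq0 (negbTE nk) /=.
  by move/eqP.
have [/existsP [j nj] | /existsPn nj] := boolP [exists j, nu j != 0]; last first.
  exfalso; apply: yz; apply/eqP; rewrite -subr_eq0 ey big1 // => k _.
  by move: (nj k); rewrite negbK => /eqP ->; rewrite scale0r.
have crj := Zk j nj.
have others : forall k, k != j -> nu k = 0.
  move=> k kj; case: (eqVneq (nu k) 0) => // nk; exfalso.
  have crk := Zk k nk.
  apply: Hd.
  exists (fun i : 'I_3 => match nat_of_ord i with
      0 => z | 1 => z + eps j *: r j | _ => z + eps k *: r k end); split.
    move=> [[|[|i]] Hi] /=; apply/Hf; split => //.
    all: try (by rewrite dotpDr dotpZr ?crj ?crk mulr0 addr0).
  apply: affindep3; apply: indep2_of => //; first by rewrite eq_sym.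
    by rewrite gt_eqF.
  by rewrite gt_eqF.
exists j, (nu j); split; first by rewrite lt_def nj nu0.
have e2 : y - z = nu j *: r j.
  by rewrite ey (bigD1 j) //= big1 ?addr0 // => k kj; rewrite others // scale0r.
by rewrite -e2 addrC subrK.
Qed.

Lemma irred_gen G0 : exists G, (forall g, g \in G -> g \in G0) /\
  (forall p, cone G0 p -> cone G p) /\ (forall g, g \in G -> ~ cone (rem g G) g).
Proof.
have [N] : exists N, (size G0 < N)%N by exists (size G0).+1.
elim: N G0 => // N IH G0 hs.
case: (classic (exists2 g, g \in G0 & cone (rem g G0) g)) => [[g gG hg] | nh].
  have hs' : (size (rem g G0) < N)%N.
    have p0 : (0 < size G0)%N by rewrite lt0n size_eq0; apply/eqP => e; rewrite e in gG.
    by rewrite size_rem //; case: (size G0) hs p0.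
  have [G [GG [GC Gi]]] := IH _ hs'.
  exists G; split; first by move=> x /GG /mem_rem.
  split => // p /(cone_rem g) [k [k0 hk]]; apply: GC.
  by rewrite -(subrK (k *: g) p); apply: coneD => //; apply: coneZ.
exists G0; split => //; split => // g gG hg; apply: nh; by exists g.
Qed.

Lemma cone_at_vertex K S w l : (forall y, K y <-> hullw S 1 y) -> is_vertex K w ->
  (forall u, adjacent K w u <-> u \in l) ->
  forall y, K y -> cone [seq u - w | u <- l] (y - w).
Proof.
move=> HK vw Hl.
have [c0 [b0 [H0le H0f]]] := vw.
have [Kw cw] := (H0f w).1 erefl.
have SK : forall s, s \in S -> K s by move=> s /hullw_mem /HK.
pose G0 := [seq s - w | s <- S & s != w].
have G0neg : forall h, h \in G0 -> dotp c0 h < 0.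
  move=> h /mapP [s]; rewrite mem_filter => /andP [sw sS] ->.
  rewrite dotpBr cw subr_lt0 lt_neqAle (H0le _ (SK s sS)) andbT.
  apply/eqP => e; move/eqP: sw; apply; apply/H0f; split => //; exact: SK.
have coneG0 : forall y, K y -> cone G0 (y - w).
  move=> y /HK [l0 [h [s e]]].
  rewrite e [X in _ - X](_ : w = \sum_i l0 i *: w); last by rewrite -scaler_suml s scale1r.
  rewrite -sumrB; apply: cone_sum => i _; rewrite -scalerBr; apply: coneZ => //.
  case: (eqVneq S`_i w) => [-> | ne]; first by rewrite subrr; apply: cone0.
  by apply: cone_mem; apply: map_f; rewrite mem_filter ne mem_nth.
have [G [GG0 [G0G Girr]]] := irred_gen G0.
have Gneg : forall h, h \in G -> dotp c0 h < 0 by move=> h /GG0 /G0neg.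
have Key : forall g, g \in G -> cone [seq u - w | u <- l] g.
  move=> g gG.
  have [c3 [c3g c3h]] := farkas (Girr g gG).
  have c0g := Gneg g gG.
  pose kap := dotp c3 g / (- dotp c0 g).
  have kap0 : 0 < kap by apply: divr_gt0 => //; rewrite oppr_gt0.
  pose c2 := c3 + kap *: c0.
  have c2g : dotp c2 g = 0.
    rewrite dotpDl dotpZl /kap; field; by rewrite ?oppr_eq0 lt_eqF.
  have c2h : forall h, h \in rem g G -> dotp c2 h < 0.
    move=> h hh; rewrite dotpDl dotpZl.
    have := c3h h hh; have := Gneg h (mem_rem hh) => h1 h2.
    have : kap * dotp c0 h < 0 by rewrite pmulr_rlt0.
    lra.
  have gnz : g != 0 by apply/eqP => g0; move: c0g; rewrite g0 dotp0r ltxx.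
  have [s] : exists2 s, s \in S & g = s - w.
    by move: (GG0 g gG) => /mapP [s]; rewrite mem_filter => /andP [_ sS] ->; exists s.
  move=> sS gs.
  have Hc : forall y, K y -> dotp c2 y <= dotp c2 w.
    move=> y Ky; have [k [k0 hk]] := cone_rem g (G0G _ (coneG0 _ Ky)).
    have := cone_le hk (fun h hh => ltW (c2h h hh)).
    by rewrite dotpBr dotpZr c2g mulr0 subr0 dotpBr subr_le0.
  have Hline : forall y, K y -> dotp c2 y = dotp c2 w -> exists tau, y = w + tau *: g.
    move=> y Ky cy; have [k [k0 hk]] := cone_rem g (G0G _ (coneG0 _ Ky)).
    have := cone_strict hk c2h.
    rewrite dotpBr dotpZr c2g mulr0 subr0 dotpBr cy subrr lexx => /(_ isT) /eqP.
    by rewrite subr_eq0 => /eqP e; exists k; rewrite -e addrC subrK.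
  have Kwg : K (w + 1 *: g) by rewrite scale1r gs addrC subrK; exact: SK.
  have [tau [t1 adj]] := edge_lemma HK vw Hc Hline gnz ltr01 Kwg c2g.
  have t0 : 0 < tau by apply: lt_le_trans t1.
  have : tau *: g \in [seq u - w | u <- l].
    by rewrite -(addKr w (tau *: g)) addrC; apply: map_f; apply/Hl.
  have it : 0 <= tau^-1 by rewrite invr_ge0 ltW.
  move=> /cone_mem /(coneZ it).
  by rewrite scalerA mulVf ?gt_eqF // scale1r.
move=> y Ky; apply: cone_sub Key _; exact: G0G (coneG0 _ Ky).
Qed.

End Aux.

Section Slice.
Variables (R : realFieldType) (n : nat).
Notation pt := 'rV[R]_n.
Implicit Types (c x y z g p q : pt) (X G S : seq pt) (K : pt -> Prop).

Lemma mass (V : lmodType R) m (L : pred 'I_m) (lam al be : 'I_m -> R) (F : 'I_m -> V) B :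
  B != 0 -> B = \sum_(i | L i) lam i * be i ->
  \sum_(i | L i) \sum_(j | ~~ L j) ((lam i * lam j / B) *: (al j *: F i + be i *: F j)) =
  ((\sum_(j | ~~ L j) lam j * al j) / B) *: \sum_(i | L i) lam i *: F i
   + \sum_(j | ~~ L j) lam j *: F j.
Proof.
move=> B0 BE.
transitivity (\sum_(i | L i) \sum_(j | ~~ L j) ((lam i * lam j / B * al j) *: F i)
  + \sum_(i | L i) \sum_(j | ~~ L j) ((lam i * lam j / B * be i) *: F j)).
  rewrite -big_split; apply: eq_bigr => i _; rewrite -big_split; apply: eq_bigr => j _.
  by rewrite scalerDr !scalerA.
congr (_ + _).
  rewrite scaler_sumr; apply: eq_bigr => i _; rewrite -scaler_suml scalerA; congr (_ *: _).
  rewrite !mulr_suml; apply: eq_bigr => j _; ring.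
rewrite exchange_big /=; apply: eq_bigr => j _; rewrite -scaler_suml; congr (_ *: _).
transitivity (lam j * (\sum_(i | L i) lam i * be i) / B).
  rewrite mulr_sumr mulr_suml; apply: eq_bigr => i _; ring.
by rewrite -BE mulfK.
Qed.

Lemma mass_scal m (L : pred 'I_m) (lam al be : 'I_m -> R) B :
  B != 0 -> B = \sum_(i | L i) lam i * be i ->
  \sum_(i | L i) \sum_(j | ~~ L j) (lam i * lam j / B * (al j + be i)) =
  ((\sum_(j | ~~ L j) lam j * al j) / B) * \sum_(i | L i) lam i
   + \sum_(j | ~~ L j) lam j.
Proof.
move=> B0 BE; have := @mass R^o m L lam al be (fun _ => (1 : R^o)) B B0 BE.
move=> H.
have E : forall x y : R, x * y = x *: (y : R^o) by [].
transitivity (\sum_(i | L i) \sum_(j | ~~ L j) ((lam i * lam j / B) *: ((al j *: (1 : R^o) + be i *: (1 : R^o)) : R^o))).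
  by apply: eq_bigr => i _; apply: eq_bigr => j _; rewrite /GRing.scale /= !mulr1.
rewrite H; congr (_ + _).
  by rewrite /GRing.scale /=; congr (_ * _); apply: eq_bigr => i _; rewrite mulr1.
by apply: eq_bigr => i _; rewrite /GRing.scale /= mulr1.
Qed.

Definition crossp (a : pt) (b : R) x z :=
  ((dotp a z - b) / (dotp a z - dotp a x)) *: x + ((b - dotp a x) / (dotp a z - dotp a x)) *: z.

Definition slice_set S (a : pt) (b : R) :=
  [seq s <- S | dotp a s <= b] ++
  [seq crossp a b x z | x <- [seq s <- S | dotp a s <= b], z <- [seq s <- S | b < dotp a s]].

Lemma crossp_dot a b x z : dotp a x <= b -> b < dotp a z -> dotp a (crossp a b x z) = b.
Proof.
move=> hx hz; rewrite /crossp dotpDr !dotpZr.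
have d : dotp a z - dotp a x != 0 by rewrite subr_eq0 gt_eqF // (le_lt_trans hx hz).
by field.
Qed.

Lemma slice S a b y :
  (hullw S 1 y /\ dotp a y <= b) <-> hullw (slice_set S a b) 1 y.
Proof.
split; last first.
  move=> H; have Hm : forall x, x \in slice_set S a b -> hullw S 1 x /\ dotp a x <= b.
    move=> x; rewrite mem_cat => /orP [| /allpairsP [[x1 z1] [/= h1 h2 ->]]].
      by rewrite mem_filter => /andP [ax xS]; split => //; apply: hullw_mem.
    move: h1 h2; rewrite !mem_filter => /andP [ax xS] /andP [az zS].
    split; last by rewrite crossp_dot.
    have d : dotp a z1 - dotp a x1 != 0 by rewrite subr_eq0 gt_eqF // (le_lt_trans ax az).
    have dp : 0 < dotp a z1 - dotp a x1 by rewrite subr_gt0 (le_lt_trans ax az).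
    have w1 : 0 <= (dotp a z1 - b) / (dotp a z1 - dotp a x1).
      by apply: divr_ge0; [rewrite subr_ge0 ltW | apply: ltW].
    have w2 : 0 <= (b - dotp a x1) / (dotp a z1 - dotp a x1).
      by apply: divr_ge0; [rewrite subr_ge0 | apply: ltW].
    have := hullwD (hullwZ w1 (hullw_mem xS)) (hullwZ w2 (hullw_mem zS)).
    have -> : (dotp a z1 - b) / (dotp a z1 - dotp a x1) * 1 +
              (b - dotp a x1) / (dotp a z1 - dotp a x1) * 1 = 1 by field.
    by [].
  split; first by apply: hullw_sub H => x /Hm [].
  by rewrite -[b]mul1r; apply: (hullw_le H) => x /Hm [].
move=> [[lam [h [s e]]] ay].
pose L := fun i : 'I_(size S) => dotp a S`_i <= b.
have memL : forall i, L i -> S`_i \in slice_set S a b.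
  by move=> i Li; rewrite mem_cat mem_filter; rewrite /L in Li; rewrite Li mem_nth.
have memC : forall i j, L i -> ~~ L j -> crossp a b S`_i S`_j \in slice_set S a b.
  move=> i j Li Lj; rewrite /L in Li Lj; rewrite mem_cat; apply/orP; right; apply: allpairs_f.
    by rewrite mem_filter Li mem_nth.
  by rewrite mem_filter ltNge Lj mem_nth.
pose B := \sum_(i | L i) lam i * (b - dotp a S`_i).
pose A := \sum_(i | ~~ L i) lam i * (dotp a S`_i - b).
have AB : dotp a y - b = A - B.
  rewrite e dotp_sumr -[b]mul1r -s mulr_suml -sumrB (bigID L) /= addrC /A /B -sumrN.
  by congr (_ + _); apply: eq_bigr => i _; rewrite dotpZr; ring.
have A0 : 0 <= A.
  by apply: sumr_ge0 => i Li; apply: mulr_ge0 => //; rewrite subr_ge0 ltW // ltNge.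
have B0 : 0 <= B by apply: sumr_ge0 => i Li; apply: mulr_ge0 => //; rewrite subr_ge0.
have AleB : A <= B by lra.
have yE : y = \sum_(i | L i) lam i *: S`_i + \sum_(i | ~~ L i) lam i *: S`_i.
  by rewrite e (bigID L).
have sE : \sum_(i | L i) lam i + \sum_(i | ~~ L i) lam i = 1 by rewrite -s [RHS](bigID L).
have hL : forall i, L i -> hullw (slice_set S a b) (lam i) (lam i *: S`_i).
  by move=> i Li; have := hullwZ (h i) (hullw_mem (memL i Li)); rewrite mulr1.
case: (eqVneq B 0) => [B00 | Bn0].
  have A00 : A = 0 by lra.
  have H0 : forall i, ~~ L i -> 0 <= lam i * (dotp a S`_i - b).
    by move=> i Li; apply: mulr_ge0 => //; rewrite subr_ge0 ltW // ltNge.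
  have Z := psumr_eq0P H0 A00.
  have lamU : forall i, ~~ L i -> lam i = 0.
    move=> i Li; have /eqP := Z i Li; rewrite mulf_eq0 subr_eq0 => /orP [/eqP // | /eqP E].
    by move: Li; rewrite /L E lexx.
  have W : \sum_(i | L i) lam i = 1 by rewrite -sE [X in _ + X]big1 ?addr0 // => i /lamU.
  rewrite yE [X in _ + X]big1 ?addr0; last by move=> i /lamU ->; rewrite scale0r.
  by rewrite -[X in hullw _ X _]W; apply: hullw_sum.
have Bp : 0 < B by rewrite lt_def Bn0.
pose kap := fun i j => lam i * lam j * (dotp a S`_j - dotp a S`_i) / B.
pose al := fun j : 'I_(size S) => dotp a S`_j - b.
pose be := fun i : 'I_(size S) => b - dotp a S`_i.
have crossE : forall i j, L i -> ~~ L j ->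
   kap i j *: crossp a b S`_i S`_j = (lam i * lam j / B) *: (al j *: S`_i + be i *: S`_j).
  move=> i j Li Lj.
  have d : dotp a S`_j - dotp a S`_i != 0.
    by rewrite subr_eq0 gt_eqF // (le_lt_trans Li) // ltNge.
  by apply/rowP => k; rewrite /kap /crossp /al /be !mxE; field; rewrite Bn0 d.
have kapE : forall i j, kap i j = lam i * lam j / B * (al j + be i).
  by move=> i j; rewrite /kap /al /be; field.
have kap0 : forall i j, L i -> ~~ L j -> 0 <= kap i j.
  move=> i j Li Lj; rewrite /kap; apply: divr_ge0; last exact: ltW.
  apply: mulr_ge0; first exact: mulr_ge0.
  by rewrite subr_ge0 ltW // (le_lt_trans Li) // ltNge.
have M1 := @mass pt _ L lam al be (fun i => S`_i) B Bn0 erefl.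
have M2 := @mass_scal _ L lam al be B Bn0 erefl.
have AE : \sum_(j | ~~ L j) lam j * al j = A by [].
rewrite AE in M1 M2.
have yE2 : y = \sum_(i | L i) ((1 - A / B) * lam i) *: S`_i +
    \sum_(i | L i) \sum_(j | ~~ L j) kap i j *: crossp a b S`_i S`_j.
  have T2E : \sum_(i | L i) \sum_(j | ~~ L j) kap i j *: crossp a b S`_i S`_j =
    \sum_(i | L i) \sum_(j | ~~ L j) ((lam i * lam j / B) *: (al j *: S`_i + be i *: S`_j)).
    by apply: eq_bigr => i Li; apply: eq_bigr => j Lj; apply: crossE.
  rewrite T2E M1 yE addrA; congr (_ + _).
  rewrite scaler_sumr -big_split /=; apply: eq_bigr => i _.
  by rewrite scalerA -scalerDl; congr (_ *: _); ring.
have wE : \sum_(i | L i) (1 - A / B) * lam i + \sum_(i | L i) \sum_(j | ~~ L j) kap i j = 1.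
  have T2E : \sum_(i | L i) \sum_(j | ~~ L j) kap i j =
    \sum_(i | L i) \sum_(j | ~~ L j) (lam i * lam j / B * (al j + be i)).
    by apply: eq_bigr => i Li; apply: eq_bigr => j Lj; apply: kapE.
  rewrite T2E M2 -mulr_sumr -[RHS]sE; ring.
rewrite yE2 -[X in hullw _ X _]wE; apply: hullwD.
  apply: hullw_sum => i Li.
  have c0 : 0 <= 1 - A / B by rewrite subr_ge0 ler_pdivrMr // mul1r.
  by have := hullwZ c0 (hL i Li); rewrite scalerA.
apply: hullw_sum => i Li; apply: hullw_sum => j Lj.
by have := hullwZ (kap0 i j Li Lj) (hullw_mem (memC i j Li Lj)); rewrite mulr1.
Qed.

End Slice.

Section Helpers.
Variables (R : realFieldType) (n : nat).
Notation pt := 'rV[R]_n.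
Implicit Types (c x y z g p q : pt) (X G S : seq pt) (K : pt -> Prop).

Lemma cone_nat (f : pt -> pt) (l : seq pt) p : cone (map f l) p ->
  exists mu : nat -> R, (forall i, 0 <= mu i) /\ p = \sum_(i < size l) mu i *: f l`_i.
Proof.
elim: l p => [|u l IH] p /=.
  move/cone_nil => ->; exists (fun _ => 0); split => //; by rewrite big_ord0.
move=> [t /hullw_cons [k [k0 hk]]].
have [mu [mu0 e]] := IH (p - k *: f u) (ex_intro _ (t - k) hk).
exists (fun i => if i is j.+1 then mu j else k); split; first by case.
by rewrite big_ord_recl /= -[p](subrK (k *: f u)) e addrC.
Qed.

Lemma cone_fam (f : pt -> pt) (l : seq pt) d p : size l = d -> cone (map f l) p ->
  exists mu : 'I_d -> R, (forall k, 0 <= mu k) /\ p = \sum_(k < d) mu k *: f l`_k.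
Proof.
move=> sz /cone_nat [mu [mu0 e]]; exists (fun k => mu (nat_of_ord k)); split => //.
by rewrite e sz.
Qed.

Lemma indep_of_span m (q : 'I_m -> pt) (p : 'I_m.+1 -> pt) w :
  (forall i, exists mu : 'I_m -> R, p i - w = \sum_k mu k *: q k) -> affindep p -> indep q.
Proof.
move=> Hs A; apply: rowfree_indep.
have sub : ((\matrix_(i < m) (p (lift ord0 i) - p ord0)) <= \matrix_(k < m) q k)%MS.
  apply/row_subP => i; rewrite rowK.
  have [mu1 e1] := Hs (lift ord0 i); have [mu0 e0] := Hs ord0.
  have -> : p (lift ord0 i) - p ord0 = (\row_k (mu1 k - mu0 k)) *m \matrix_(k < m) q k.
    rewrite mulmx_rows; under eq_bigr do rewrite mxE scalerBl.
    by rewrite sumrB -e1 -e0 opprB addrA subrK.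
  exact: submxMl.
rewrite /row_free; apply/eqP/anti_leq; rewrite rank_leq_row /=.
by apply: (leq_trans _ (mxrankS sub)); rewrite (eqP A).
Qed.

Lemma hull3 S y1 y2 y3 (c1 c2 c3 : R) : hullw S 1 y1 -> hullw S 1 y2 -> hullw S 1 y3 ->
  0 <= c1 -> 0 <= c2 -> 0 <= c3 -> c1 + c2 + c3 = 1 ->
  hullw S 1 (c1 *: y1 + c2 *: y2 + c3 *: y3).
Proof.
move=> h1 h2 h3 p1 p2 p3 s.
have := hullwD (hullwD (hullwZ p1 h1) (hullwZ p2 h2)) (hullwZ p3 h3).
by rewrite !mulr1 s.
Qed.

Lemma step2 (dl x1 x2 : R) : 0 < dl ->
  let e := dl / (dl + `|x1| + `|x2|) in 0 < e /\ e * x1 <= dl /\ e * x2 <= dl /\ e <= 1 + 0.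
Proof.
move=> d0 e.
have D : 0 < dl + `|x1| + `|x2| by rewrite -addrA ltr_pwDl // addr_ge0.
have e0 : 0 < e by rewrite /e divr_gt0.
have ex : forall x : R, `|x| <= `|x1| + `|x2| -> e * x <= dl.
  move=> x hx; apply: le_trans (ler_wpM2l (ltW e0) (ler_norm x)) _.
  rewrite /e mulrAC ler_pdivrMr // ler_pM2l //.
  have := normr_ge0 x1; have := normr_ge0 x2; lra.
split => //; split; first by apply: ex; rewrite lerDl.
split; first by apply: ex; rewrite lerDr.
rewrite addr0 /e ler_pdivrMr // mul1r -addrA lerDl; exact: addr_ge0.
Qed.

Lemma sum_upd m (mu : 'I_m -> R) (X : 'I_m -> pt) t (c0 : R) :
  \sum_k (mu k + (k == t)%:R * c0) *: X k = \sum_k mu k *: X k + c0 *: X t.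
Proof.
rewrite (eq_bigr (fun k => mu k *: X k + ((k == t)%:R * c0) *: X k)); last first.
  by move=> k _; rewrite scalerDl.
by rewrite big_split /= sum_delta.
Qed.

Lemma sum_upd_s m (mu rho : 'I_m -> R) t (c0 : R) :
  \sum_k (mu k + (k == t)%:R * c0) * rho k = \sum_k mu k * rho k + c0 * rho t.
Proof.
rewrite (eq_bigr (fun k => mu k * rho k + ((k == t)%:R * c0) * rho k)); last first.
  by move=> k _; rewrite mulrDl.
rewrite big_split /=; congr (_ + _).
rewrite (bigD1 t) //= eqxx mul1r big1 ?addr0 // => k /negbTE ->.
by rewrite !mul0r.
Qed.

Lemma sum_r m (mu rho : 'I_m -> R) (d : 'I_m -> pt) t :
  \sum_k mu k *: (d k - rho k *: d t) = \sum_k mu k *: d k - (\sum_k mu k * rho k) *: d t.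
Proof.
rewrite scaler_suml -sumrB; apply: eq_bigr => k _; by rewrite scalerBr scalerA.
Qed.

End Helpers.

Unset Implicit Arguments.

Theorem lemma2p15 (R : realFieldType) (n d : nat)
    (P : 'rV[R]_n -> Prop) (x : 'rV[R]_n) (T : 'rV[R]_n -> Prop)
    (a : 'rV[R]_n) (b : R) (w v : 'rV[R]_n) :
  is_polytope P -> has_dim P d ->
  is_vertex P x -> is_face P T -> T x ->
  (* truncation halfspace {y | a.y <= b} *)
  a != 0 ->
  (forall t, is_vertex P t -> T t -> b < dotp a t) ->
  (forall u, is_vertex P u -> ~ T u -> dotp a u < b) ->
  let P' := fun y => P y /\ dotp a y <= b in
  let F := fun y => P' y /\ dotp a y = b in
  adjacent P x w -> ~ T w ->
  is_vertex P' v -> F v -> adjacent P' w v ->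
  simple_at P w ->
  simple_at P' v.
Proof.
move=> [S HS0] _ vx fT Tx a0 HT HnT P' F adjxw nTw vv Fv adjwv [d0 [hd [l [ul sl Hl]]]].
have HS : forall y, P y <-> hullw S 1 y := HS0.
have vw : is_vertex P w by case: adjxw.
have Pw : P w := vertex_in vw.
have aw : dotp a w < b := HnT w vw nTw.
have [[Pv _] av] : P' v /\ dotp a v = b := Fv.
pose dd := fun k : 'I_d0 => l`_k - w.
have lmem : forall k : 'I_d0, l`_k \in l by move=> k; apply: mem_nth; rewrite sl.
have lv : forall k : 'I_d0, is_vertex P l`_k by move=> k; have [] := (Hl _).2 (lmem k).
have lP : forall k : 'I_d0, P l`_k by move=> k; apply: vertex_in.
have Hcone : forall y, P y -> exists mu : 'I_d0 -> R,
    (forall k, 0 <= mu k) /\ y - w = \sum_k mu k *: dd k.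
  move=> y Py; exact: (cone_fam (f := fun u => u - w) sl (cone_at_vertex HS vw Hl Py)).
have indd : indep dd.
  have [[p [Pp Ap]] _] := hd.
  apply: (indep_of_span (w := w) _ Ap) => i.
  by have [mu [_ e]] := Hcone _ (Pp i); exists mu.
have conv2 : forall y1 y2 (th : R), P y1 -> P y2 -> 0 <= th -> th <= 1 ->
    P ((1 - th) *: y1 + th *: y2).
  move=> y1 y2 th /HS h1 /HS h2 t0 t1; apply/HS.
  have t0' : 0 <= 1 - th by rewrite subr_ge0.
  by have := hullwD (hullwZ t0' h1) (hullwZ t0 h2); rewrite !mulr1 subrK.
have bw : 0 < b - dotp a w by rewrite subr_gt0.
pose e1 := fun k : 'I_d0 => (b - dotp a w) / ((b - dotp a w) + `|dotp a (dd k)| + `|0 : R|).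
have He1 : forall k, [/\ 0 < e1 k, e1 k * dotp a (dd k) <= b - dotp a w & e1 k <= 1].
  move=> k; have [h1 [h2 [_ h4]]] := step2 (dotp a (dd k)) 0 bw.
  by rewrite addr0 in h4; split.
have HK1 : forall k, P' (w + e1 k *: dd k).
  move=> k; have [h1 h2 h3] := He1 k; split.
    have -> : w + e1 k *: dd k = (1 - e1 k) *: w + e1 k *: l`_k.
      by apply/rowP => i; rewrite !mxE; ring.
    by apply: conv2 => //; apply: ltW.
  by rewrite dotpDr dotpZr; lra.
have [_ _ wv [E' [fE' dE' E'w E'v]]] := adjwv.
have [t [lam [lam0 ev]]] := ray_of_edge (K := P') (z := w) (r := dd) (eps := e1) (E := E') (y := v)
   indd (fun k => let: And3 h _ _ := He1 k in h) HK1
   (fun y Hy => Hcone y (proj1 Hy)) fE' dE' E'w E'v (fun e => wv (esym e)).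
pose al := dotp a (dd t).
have avE : dotp a v = dotp a w + lam * al by rewrite ev dotpDr dotpZr.
have al0 : 0 < al.
  have : 0 < lam * al by lra.
  by rewrite pmulr_rgt0.
have alnz : al != 0 by rewrite gt_eqF.
have vt : is_vertex P l`_t := lv t.
have lam1 : lam < 1.
  case: (ltgtP lam 1) => // [gt1 | eq1].
    have iv0 : 0 < lam^-1 by rewrite invr_gt0.
    have iv1 : lam^-1 < 1 by rewrite invf_lt1.
    have E : l`_t = (1 - lam^-1) *: w + lam^-1 *: v.
      have ln : lam != 0 by rewrite gt_eqF.
      by apply/rowP => i; rewrite ev !mxE; field.
    have := vertex_between vt Pw Pv iv0 iv1 E.
    by have [_ _ wt _] := (Hl _).2 (lmem t) => /esym.
  have evt : v = l`_t by rewrite ev eq1 scale1r addrC subrK.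
  case: (classic (T l`_t)) => Tt.
    by have := HT _ vt Tt; rewrite -evt av ltxx.
  by have := HnT _ vt Tt; rewrite -evt av ltxx.
pose rho := fun k : 'I_d0 => dotp a (dd k) / al + (k == t)%:R.
pose r := fun k : 'I_d0 => dd k - rho k *: dd t.
have rhot : rho t = 2 by rewrite /rho eqxx divff.
have rhok : forall k, k != t -> rho k = dotp a (dd k) / al.
  by move=> k kt; rewrite /rho (negbTE kt) addr0.
have ar : forall k, dotp a (r k) = - ((k == t)%:R * al).
  by move=> k; rewrite /r /rho dotpBr dotpZr -/al; field.
have indr : indep r.
  move=> mu e; rewrite sum_r in e.
  pose mu' := fun k => mu k + (k == t)%:R * (- \sum_j mu j * rho j).
  have e' : \sum_k mu' k *: dd k = 0 by rewrite sum_upd scaleNr.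
  have Z := indd mu' e'.
  have mk : forall k, k != t -> mu k = 0.
    by move=> k kt; have := Z k; rewrite /mu' (negbTE kt) mul0r addr0.
  have mt : mu t = 0.
    have := Z t; rewrite /mu' eqxx mul1r (bigD1 t) //= big1 ?addr0; last first.
      by move=> k kt; rewrite mk // mul0r.
    rewrite rhot => h; lra.
  by move=> k; case: (eqVneq k t) => [-> // | /mk].
pose dl := Num.min lam (1 - lam).
have dl0 : 0 < dl by rewrite /dl lt_min lam0 subr_gt0 lam1.
have dll : dl <= lam by rewrite /dl ge_min lexx.
have dl1 : dl <= 1 - lam by rewrite /dl ge_min lexx orbT.
pose x1 := fun k : 'I_d0 => dotp a (dd k) / al.
pose e2 := fun k : 'I_d0 => dl / (dl + `|x1 k| + `|1 - x1 k|).
pose eps := fun k : 'I_d0 => if k == t then lam else e2 k.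
have eps0 : forall k, 0 < eps k.
  move=> k; rewrite /eps; case: ifP => // _.
  by have [h _] := step2 (x1 k) (1 - x1 k) dl0.
have HK2 : forall k, P' (v + eps k *: r k).
  move=> k; rewrite /eps; case: (eqVneq k t) => [-> | kt].
    have -> : v + lam *: r t = w.
      apply/rowP => i; rewrite /r rhot ev !mxE; ring.
    by split => //; apply: ltW.
  have [h1 [h2 [h3 _]]] := step2 (x1 k) (1 - x1 k) dl0.
  rewrite -/(e2 k) in h1 h2 h3.
  split; last by rewrite dotpDr dotpZr ar (negbTE kt) mul0r oppr0 mulr0 addr0 av.
  have -> : v + e2 k *: r k =
      (1 - (lam - e2 k * x1 k) - e2 k) *: w + (lam - e2 k * x1 k) *: l`_t + e2 k *: l`_k.
    apply/rowP => i; rewrite /r rhok // ev !mxE /x1; ring.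
  apply/HS; apply: hull3; try apply/HS => //; try lra.
have HconeV : forall y, P' y -> exists nu : 'I_d0 -> R,
    (forall k, 0 <= nu k) /\ y - v = \sum_k nu k *: r k.
  move=> y [Py ay]; have [mu [mu0 ey]] := Hcone y Py.
  pose N := (b - dotp a y) / al.
  have N0 : 0 <= N by apply: divr_ge0; [rewrite subr_ge0 | apply: ltW].
  exists (fun k => mu k + (k == t)%:R * (N - mu t)); split.
    move=> k /=; case: (eqVneq k t) => [-> | kt].
      by rewrite /= ?mulr1n mul1r addrC subrK.
    by rewrite /= mul0r addr0.
  rewrite sum_r sum_upd sum_upd_s.
  have SR : \sum_k mu k * rho k = (\sum_k mu k * dotp a (dd k)) / al + mu t.
    rewrite /rho (eq_bigr (fun k => mu k * dotp a (dd k) / al + (k == t)%:R * mu k)).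
      rewrite big_split /= mulr_suml; congr (_ + _).
      rewrite (bigD1 t) //= eqxx mul1r big1 ?addr0 //.
      by move=> k /negbTE ->; rewrite mul0r.
    by move=> k _; ring.
  have ay' : dotp a y - dotp a w = \sum_k mu k * dotp a (dd k).
    by rewrite -dotpBr ey dotp_sumr; apply: eq_bigr => k _; rewrite dotpZr.
  have hb : b = dotp a w + lam * al by rewrite -av avE.
  rewrite SR -ay' -ey rhot /N hb ev.
  by apply/rowP => i; rewrite !mxE; field.
have HS' : forall y, P' y <-> hullw (slice_set S a b) 1 y.
  move=> y; split.
    by move=> [/HS h1 h2]; apply/slice; split.
  by move/slice => [/HS h1 h2]; split.
have Hex : forall j, exists tau, eps j <= tau /\ adjacent P' v (v + tau *: r j).
  move=> j; have [cj hcj] := solve_dual (fun k => - (k != j)%:R) indr.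
  have cdot : forall (nu : 'I_d0 -> R) y, y - v = \sum_k nu k *: r k ->
      dotp cj y - dotp cj v = - \sum_k nu k * (k != j)%:R.
    move=> nu y e; rewrite -dotpBr e dotp_sumr -sumrN; apply: eq_bigr => k _.
    by rewrite dotpZr hcj mulrN.
  have Hc : forall y, P' y -> dotp cj y <= dotp cj v.
    move=> y Py; have [nu [nu0 e]] := HconeV y Py.
    have := cdot nu y e; rewrite -subr_le0 => ->; rewrite oppr_le0.
    by apply: sumr_ge0 => k _; apply: mulr_ge0.
  have Hline : forall y, P' y -> dotp cj y = dotp cj v -> exists tau, y = v + tau *: r j.
    move=> y Py cy; have [nu [nu0 e]] := HconeV y Py.
    have := cdot nu y e; rewrite cy subrr => /esym /eqP; rewrite oppr_eq0 => /eqP S0.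
    have Z := psumr_eq0P (fun k _ => mulr_ge0 (nu0 k) (ler0n _ (k != j))) S0.
    have ey2 : y - v = nu j *: r j.
      rewrite e (bigD1 j) //= big1 ?addr0 //.
      move=> k kj; have /eqP := Z k isT; rewrite kj mulr1 => /eqP ->; exact: scale0r.
    by exists (nu j); rewrite -ey2 addrC subrK.
  have rj0 : r j != 0.
    apply/eqP => rj; have := indr (fun k => (k == j)%:R * 1).
    by rewrite sum_delta rj scaler0 => /(_ erefl j); rewrite eqxx mul1r => /eqP; rewrite oner_eq0.
  have cjr : dotp cj (r j) = 0 by rewrite hcj eqxx oppr0.
  exact: (edge_lemma HS' vv Hc Hline rj0 (eps0 j) (HK2 j) cjr).
pose tau := fun j => proj1_sig (constructive_indefinite_description _ (Hex j)).
have Htau : forall j, eps j <= tau j /\ adjacent P' v (v + tau j *: r j).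
  by move=> j; exact: proj2_sig (constructive_indefinite_description _ (Hex j)).
have tau0 : forall j, 0 < tau j by move=> j; apply: lt_le_trans (eps0 j) (Htau j).1.
have P'v : P' v := proj1 Fv.
exists d0; split.
  split.
    exists (fun i : 'I_d0.+1 => if unlift ord0 i is Some k then v + eps k *: r k else v); split.
      by move=> i; case: (unlift ord0 i) => [k|]; [exact: HK2 | exact: P'v].
    apply: indep_rowfree => mu.
    rewrite (eq_bigr (fun k => (mu k * eps k) *: r k)); last first.
      by move=> k _; rewrite liftK unlift_none addrC addKr scalerA.
    move=> e k; have /eqP := indr _ e k; rewrite mulf_eq0 (gt_eqF (eps0 k)) orbF.
    by move/eqP.
  by move=> [p [Pp Ap]]; apply: hd.2; exists p; split => // i; exact: (Pp i).1.
exists [seq v + tau j *: r j | j <- enum 'I_d0]; split.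
- rewrite map_inj_uniq ?enum_uniq // => i j /= eij.
  case: (eqVneq i j) => // ij; exfalso.
  have e0 : \sum_k ((k == i)%:R * tau i - (k == j)%:R * tau j) *: r k = 0.
    rewrite (eq_bigr (fun k => ((k == i)%:R * tau i) *: r k - ((k == j)%:R * tau j) *: r k)).
      rewrite sumrB !sum_delta; apply/eqP; rewrite subr_eq0; apply/eqP; exact: (addrI v eij).
    by move=> k _; rewrite scalerBl.
  have := indr _ e0 i; rewrite eqxx (negbTE ij) mul0r subr0 mul1r => ti.
  by move: (tau0 i); rewrite ti ltxx.
- by rewrite size_map size_enum_ord.
move=> u; split.
  move=> [_ vu vnu [E [fE dE Ev Eu]]].
  have [j [nu [nu0 eu]]] := ray_of_edge indr eps0 HK2 HconeV fE dE Ev Eu (fun e => vnu (esym e)).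
  apply/mapP; exists j; first by rewrite mem_enum.
  have [_ [_ vtj vnt _]] := Htau j.
  have tj := tau0 j.
  case: (ltgtP nu (tau j)) => [lt | gt | eq].
  - exfalso; apply: vnu.
    have E2 : u = (1 - nu / tau j) *: v + (nu / tau j) *: (v + tau j *: r j).
      by rewrite eu; apply/rowP => i; rewrite !mxE; field; rewrite gt_eqF.
    symmetry; apply: (vertex_between vu P'v (vertex_in vtj) _ _ E2).
      by apply: divr_gt0.
    by rewrite ltr_pdivrMr // mul1r.
  - exfalso; apply: vnt.
    have E2 : v + tau j *: r j = (1 - tau j / nu) *: v + (tau j / nu) *: u.
      by rewrite eu; apply/rowP => i; rewrite !mxE; field; rewrite gt_eqF.
    symmetry; apply: (vertex_between vtj P'v (vertex_in vu) _ _ E2).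
      by apply: divr_gt0.
    by rewrite ltr_pdivrMr ?mul1r //; apply: lt_trans gt.
  - by rewrite eu eq.
by move=> /mapP [j _ ->]; exact: (Htau j).2.
Qed.
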